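(* Let $\mathcal{G}$ be a metric graph as in the context and suppose $\overline{\mathcal{G}}$ is compact. Then $\partial\overline{\mathcal{G}}$ is totally disconnected if and only if $\overline{\mathcal{G}}$ is weakly connected.
   Context: $\mathcal{G}$ is a connected, locally finite metric graph with countable vertex set and countable edge set. Each edge $e$ has a length $l_e>0$ and is identified with an interval of that length. $\mathcal{G}$ carries the geodesic distance (infimum of lengths of paths), and $\overline{\mathcal{G}}$ is its metric completion. A designated set of vertices, containing all vertices of degree $1$, forms the boundary vertices. $\mathcal{G}_{int}$ is $\mathcal{G}$ minus the boundary vertices, and $\partial\overline{\mathcal{G}}=\overline{\mathcal{G}}\setminus\mathcal{G}_{int}$. $\overline{\mathcal{G}}$ is weakly connected if for every pair of distinct points $x,y\in\overline{\mathcal{G}}$ there is a finite set $W$ of points of $\mathcal{G}$ and disjoint open subsets $U_x\ni x$, $U_y\ni y$ of $\overline{\mathcal{G}}$ with $\overline{\mathcal{G}}\setminus W=U_x\cup U_y$. *)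

(* Defs.v *)
From HB Require Import structures.
From mathcomp Require Import all_boot all_order all_algebra.
From mathcomp Require Import all_classical all_reals all_analysis.
From Stdlib Require Import Relations.
Set Implicit Arguments. Unset Strict Implicit. Unset Printing Implicit Defensive.
Import Order.TTheory GRing.Theory Num.Theory.
Local Open Scope classical_set_scope.
Local Open Scope ring_scope.

(* A (combinatorial skeleton of a) metric graph: vertices V, edges E,
   each edge e goes from [src e] to [tgt e] (loops / multiple edges allowed)
   and has length [l e] (> 0, imposed as a hypothesis in the theorem). *)

Section MetricGraph.
Variables (R : realType) (V E : Type) (src tgt : E -> V) (l : E -> R).

Definition incident (e : E) (v : V) : Prop := src e = v \/ tgt e = v.

(* v has degree exactly 1: exactly one edge end sits at v. *)
Definition deg1 (v : V) : Prop :=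
  exists e, [/\ incident e v, src e <> tgt e &
                forall e', incident e' v -> e' = e].

Definition adj (v w : V) : Prop :=
  exists e, (src e = v /\ tgt e = w) \/ (src e = w /\ tgt e = v).

Definition graph_connected : Prop := forall v w, clos_refl_trans V adj v w.

(* The points of the metric graph G: vertices, and interior points of edges
   (edge e identified with the interval [0, l e], 0 ~ src e, l e ~ tgt e). *)
Definition gpoint : Type := (V + {et : E * R | 0 < et.2 < l et.1})%type.

Definition on_edge (e : E) (t : R) (x : gpoint) : Prop :=
  (t = 0 /\ x = inl (src e)) \/ (t = l e /\ x = inl (tgt e)) \/
  (exists h : 0 < t < l e, x = inr (exist _ (e, t) h)).

Inductive gpath : gpoint -> gpoint -> R -> Prop :=
| gpath0 x : gpath x x 0
| gpathS x y z e s t c :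
    on_edge e s x -> on_edge e t y -> gpath y z c -> gpath x z (`|s - t| + c).

Definition gdist (x y : gpoint) : R := inf [set c | gpath x y c].

Definition G_int (B : set V) : set gpoint :=
  [set p | forall v, B v -> p <> inl v].

End MetricGraph.

(* The metric completion is represented by any complete metric space X
   (balls of X given by a genuine distance dX) together with a dense
   isometric embedding iota : G -> X. *)
Definition is_metric_completion (R : realType) (P : Type) (d : P -> P -> R)
    (X : completePseudoMetricType R) (dX : X -> X -> R) (iota : P -> X) : Prop :=
  [/\ (forall (x : X) (e : R) (y : X), ball x e y <-> dX x y < e),
      (forall x y : X, dX x y = 0 -> x = y),
      (forall p q : P, dX (iota p) (iota q) = d p q) &
      dense (range iota)].

Definition bdry_bar (P : Type) (X : Type) (Gint : set P) (iota : P -> X) : set X :=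
  ~` (iota @` Gint).

Definition weakly_connected (P : Type) (X : topologicalType) (iota : P -> X) : Prop :=
  forall x y : X, x <> y ->
    exists (W : set P) (Ux Uy : set X),
      [/\ finite_set W, open Ux /\ open Uy, Ux `&` Uy = set0,
          Ux x /\ Uy y & ~` (iota @` W) = Ux `|` Uy].

Arguments G_int [R V E] l B _.
Arguments gdist [R V E] src tgt l x y.

(* Main.v *)
Require Import Defs.
From HB Require Import structures.
From mathcomp Require Import all_boot all_order all_algebra.
From mathcomp Require Import all_classical all_reals all_analysis.
From Stdlib Require Import Relations.
From mathcomp Require Import lra.
Set Implicit Arguments. Unset Strict Implicit. Unset Printing Implicit Defensive.
Import Order.TTheory GRing.Theory Num.Theory.
Local Open Scope classical_set_scope.
Local Open Scope ring_scope.

Section Graph.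
Variables (R : realType) (V E : Type) (src tgt : E -> V) (l : E -> R).
Hypothesis hl : forall e, 0 < l e.

Local Notation gp := (gpoint V l).
Local Notation gpath := (gpath src tgt (l:=l)).
Local Notation on_edge := (on_edge src tgt (l:=l)).
Local Notation gdist := (gdist src tgt l).

Lemma gpath_ge0 x y c : gpath x y c -> 0 <= c.
Proof. elim=> // {}x {}y z e s t {}c _ _ _ h; exact: addr_ge0. Qed.

Lemma gpath_cat x y z c1 c2 : gpath x y c1 -> gpath y z c2 -> gpath x z (c1 + c2).
Proof.
elim=> [u|u u' u'' e s t c h1 h2 _ IH] h; first by rewrite add0r.
by rewrite -addrA; apply: gpathS h1 h2 (IH h).
Qed.

Lemma gdist_le x y c : gpath x y c -> gdist x y <= c.
Proof.
move=> h; apply: ge_inf => //; exists 0 => d /= /gpath_ge0 //.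
Qed.

Lemma gdist_ge x y d : (exists c, gpath x y c) -> (forall c, gpath x y c -> d <= c) -> d <= gdist x y.
Proof. by move=> [c hc] H; apply: lb_le_inf; [exists c|]. Qed.

Lemma gdist_lt x y r : (exists c, gpath x y c) -> gdist x y < r -> exists2 c, gpath x y c & c < r.
Proof. by move=> [c hc] H; apply: inf_lt => //; exists c. Qed.

Lemma gdist_ge0 x y : (exists c, gpath x y c) -> 0 <= gdist x y.
Proof. by move=> h; apply: gdist_ge => // c /gpath_ge0. Qed.

Lemma gdist_xx x : (exists c, gpath x x c) -> gdist x x = 0.
Proof. by move=> h; apply/eqP; rewrite eq_le gdist_ge0 // andbT; apply: gdist_le; constructor. Qed.

Definition clamp (e : E) (t : R) : R := Num.min (Num.max t 0) (l e).

Lemma clamp_ge0 e t : 0 <= clamp e t.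
Proof. by rewrite /clamp le_min le_max lexx orbT (ltW (hl e)). Qed.

Lemma clamp_le e t : clamp e t <= l e.
Proof. by rewrite /clamp ge_min lexx orbT. Qed.

Lemma clamp_id e t : 0 <= t <= l e -> clamp e t = t.
Proof. by case/andP=> h1 h2; rewrite /clamp (max_idPl h1) (min_idPl h2). Qed.

Lemma clamp_lip e s t : `|clamp e s - clamp e t| <= `|s - t|.
Proof.
rewrite /clamp.
have H1 : forall a b c : R, `|Num.max a c - Num.max b c| <= `|a - b|.
  move=> a b c; have h1 := ler_norm (a - b); have h2 := ler_norm (b - a).
  rewrite distrC in h2; rewrite ler_norml.
  move: h1 h2; set N := `|a - b| => h1 h2.
  case: (leP a c); case: (leP b c) => *; apply/andP; split; lra.
have H2 : forall a b c : R, `|Num.min a c - Num.min b c| <= `|a - b|.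
  move=> a b c; have h1 := ler_norm (a - b); have h2 := ler_norm (b - a).
  rewrite distrC in h2; rewrite ler_norml.
  move: h1 h2; set N := `|a - b| => h1 h2.
  case: (leP a c); case: (leP b c) => *; apply/andP; split; lra.
exact: le_trans (H2 _ _ _) (H1 _ _ _).
Qed.

Definition pt (e : E) (t : R) : gp :=
  let u := clamp e t in
  match pselect (0 < u < l e) with
  | left h => inr (exist (fun et : E * R => 0 < et.2 < l et.1) (e, u) h)
  | right _ => if u <= 0 then inl (src e) else inl (tgt e)
  end.

Lemma on_edge_pt e t : on_edge e (clamp e t) (pt e t).
Proof.
rewrite /pt; case: pselect => [h|h]; first by right; right; exists h.
have := clamp_ge0 e t; have := clamp_le e t.
case: ifP => H a b.
  by left; split => //; apply/eqP; rewrite eq_le H b.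
right; left; split => //; apply/eqP; rewrite eq_le a /=.
by rewrite leNgt; apply/negP => c; apply: h; rewrite c ltNge H.
Qed.

Lemma pt_src e : pt e 0 = inl (src e).
Proof.
rewrite /pt (clamp_id (e:=e)); last by rewrite lexx (ltW (hl e)).
case: pselect => [h|_]; last by rewrite lexx.
by exfalso; move: h; rewrite ltxx.
Qed.

Lemma pt_tgt e : pt e (l e) = inl (tgt e).
Proof.
rewrite /pt (clamp_id (e:=e)); last by rewrite lexx (ltW (hl e)).
case: pselect => [h|_]; last by rewrite leNgt hl.
by exfalso; move: h; rewrite ltxx andbF.
Qed.

Lemma pt_int e t (h : 0 < t < l e) : pt e t = inr (exist _ (e, t) h).
Proof.
rewrite /pt; have ht : clamp e t = t by apply: clamp_id; case/andP: h => *; apply/andP; split; lra.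
rewrite ht; case: pselect => [h'|]; last by move=> /(_ h).
by congr (inr (exist _ _ _)); apply: bool_irrelevance.
Qed.

Lemma gpath_pt e s t : gpath (pt e s) (pt e t) `|clamp e s - clamp e t|.
Proof.
rewrite -[X in gpath _ _ X]addr0; apply: gpathS (on_edge_pt e s) (on_edge_pt e t) _.
constructor.
Qed.

Lemma gdist_pt e s t : gdist (pt e s) (pt e t) <= `|s - t|.
Proof. exact: le_trans (gdist_le (gpath_pt e s t)) (clamp_lip e s t). Qed.

Hypothesis hconn : graph_connected src tgt.

Lemma reach_vv (w v : V) : exists c, gpath (inl w) (inl v) c.
Proof.
have H := clos_rt_rt1n _ _ _ _ (hconn w v).
elim: H => {w v} [w|x y z [e [[<- <-]|[<- <-]]] _ [c hc]].
- by exists 0; constructor.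
- exists (`|0 - l e| + c); apply: gpathS hc.
  + by left.
  + by right; left.
- exists (`|l e - 0| + c); apply: gpathS hc.
  + by right; left.
  + by left.
Qed.

Lemma on_edge_reach e s (x : gp) v : on_edge e s x -> exists c, gpath x (inl v) c.
Proof.
move=> h; have [c hc] := reach_vv (src e) v.
exists (`|s - 0| + c); apply: gpathS h _ hc; by left.
Qed.

Lemma point_on_edge (x : gp) : (exists v, x = inl v) \/ exists e s, on_edge e s x.
Proof.
case: x => [v|[[e t] h]]; first by left; exists v.
by right; exists e, t; right; right; exists h.
Qed.

Lemma reach (x y : gp) : exists c, gpath x y c.
Proof.
have [[w ->]|[e [s hs]]] := point_on_edge y.
  have [[v ->]|[e [s hs]]] := point_on_edge x; first exact: reach_vv.
  exact: on_edge_reach hs.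
have [c1 h1] : exists c, gpath x (inl (src e)) c.
  have [[v ->]|[e' [s' hs']]] := point_on_edge x; first exact: reach_vv.
  exact: on_edge_reach hs'.
exists (c1 + (`|0 - s| + 0)); apply: gpath_cat h1 _.
refine (gpathS _ hs (gpath0 src tgt _)). by left.
Qed.

End Graph.

Section Local.
Variables (R : realType) (V E : Type) (src tgt : E -> V) (l : E -> R).
Hypothesis hl : forall e, 0 < l e.
Hypothesis hconn : graph_connected src tgt.

Local Notation gp := (gpoint V l).
Local Notation gpath := (gpath src tgt (l:=l)).
Local Notation on_edge := (on_edge src tgt (l:=l)).
Local Notation gdist := (gdist src tgt l).
Local Notation pt := (pt src tgt l).

Definition armpt (a : E * R * R) (s : R) : gp := pt a.1.1 (a.1.2 + a.2 * s).

Definition good_local (p : gp) (r : R) (d : gp -> R) (arms : set (E * R * R)) :=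
  [/\ 0 < r,
      (forall e s t x y, on_edge e s x -> on_edge e t y -> d x <= d y + `|s - t|),
      d p = 0,
      (forall q, d q < r -> q = p \/ exists2 a, arms a & 0 < d q /\ q = armpt a (d q)) &
      (forall a, arms a -> (a.2 = 1 \/ a.2 = -1) /\ pt a.1.1 a.1.2 = p /\
         forall s, 0 <= s < r -> [/\ 0 <= a.1.2 + a.2 * s <= l a.1.1,
                                     0 < s -> 0 < a.1.2 + a.2 * s < l a.1.1 &
                                     d (armpt a s) = s])].

Section GL.
Variables (p : gp) (r : R) (d : gp -> R) (arms : set (E * R * R)).
Hypothesis hg : good_local p r d arms.

Lemma gl_path x c : gpath x p c -> d x <= c.
Proof.
case: hg => _ HL H0 _ _.
move: {1 3}p (erefl p) => q eq h; elim: h eq => [u ->|u y z e s t c' h1 h2 _ IH eq].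
  by rewrite H0.
have := IH eq; have := HL _ _ _ _ _ h1 h2 => a b.
rewrite [`|_| + _]addrC; apply: le_trans a _; rewrite lerD2r //.
Qed.

Lemma gl_dist x : d x <= gdist x p.
Proof. apply: gdist_ge; first exact: (reach hconn). exact: gl_path. Qed.

Lemma gl_arm a s : arms a -> 0 <= s < r -> gdist (armpt a s) p = s.
Proof.
move=> ha hs; case: hg => _ _ _ _ /(_ a ha) [hs1 [hp /(_ s hs) [h1 h2 h3]]].
apply/eqP; rewrite eq_le; apply/andP; split; last by rewrite -{1}h3 gl_dist.
rewrite -hp /armpt; apply: le_trans (gdist_pt src tgt hl _ _ _) _.
case/andP: hs => hs _.
by rewrite addrAC subrr add0r; case: hs1 => ->; rewrite ?mul1r ?mulN1r ?normrN ger0_norm.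
Qed.

End GL.

End Local.

Ltac minsimp := repeat match goal with
  | |- context [Order.min ?a ?b] => let h := fresh "hm" in case: (leP a b) => h
  | H : context [Order.min ?a ?b] |- _ => let h := fresh "hm" in revert H; case: (leP a b) => h H
  end.

Section Inst.
Variables (R : realType) (V E : Type) (src tgt : E -> V) (l : E -> R).
Hypothesis hl : forall e, 0 < l e.

Local Notation gp := (gpoint V l).
Local Notation on_edge := (on_edge src tgt (l:=l)).
Local Notation pt := (pt src tgt l).
Local Notation armpt := (armpt src tgt l).

Lemma min_lip (a b c d : R) : `|Num.min a b - Num.min c d| <= Num.max `|a - c| `|b - d|.
Proof.
have h1 := ler_norm (a - c); have h2 := ler_norm (c - a).
have h3 := ler_norm (b - d); have h4 := ler_norm (d - b).
rewrite distrC in h2; rewrite distrC in h4; rewrite ler_norml.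
move: h1 h2 h3 h4; set N := `|a - c|; set M := `|b - d| => h1 h2 h3 h4.
case: (leP N M) => hNM; case: (leP a b); case: (leP c d) => *; apply/andP; split; lra.
Qed.

Lemma lip_min (f g : R -> R) s t : `|f s - f t| <= `|s - t| -> `|g s - g t| <= `|s - t| ->
  `|Num.min (f s) (g s) - Num.min (f t) (g t)| <= `|s - t|.
Proof. by move=> h1 h2; apply: le_trans (min_lip _ _ _ _) _; rewrite ge_max h1 h2. Qed.

Section Vertex.
Variables (v : V) (r : R).
Hypothesis hr : 0 < r.
Hypothesis hrl : forall e, incident src tgt e v -> 2 * r <= l e.

Definition dv (q : gp) : R :=
  match q with
  | inl w => if `[< w = v >] then 0 else r
  | inr et => let e := (sval et).1 in let t := (sval et).2 in
      Num.min r (Num.min (if `[< src e = v >] then t else r)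
                         (if `[< tgt e = v >] then l e - t else r))
  end.

Definition fv (e : E) (s : R) : R :=
  Num.min r (Num.min (if `[< src e = v >] then s else r)
                     (if `[< tgt e = v >] then l e - s else r)).


Ltac cases_sv e := case: (asboolP (src e = v)) => hs; case: (asboolP (tgt e = v)) => ht;
  try (have := hrl (or_introl hs)); try (have := hrl (or_intror ht)); intros.

Lemma dv_on_edge e s x : on_edge e s x -> dv x = fv e s.
Proof.
have hle : 0 < l e := hl e.
case=> [[-> ->]|[[-> ->]|[h ->]]] //=; rewrite /fv; have hr0 := hr; cases_sv e; minsimp; lra.
Qed.

Lemma fv_lip e s t : `|fv e s - fv e t| <= `|s - t|.
Proof.
rewrite /fv; apply: (@lip_min (fun=> r) (fun s => Num.min _ _)).
  by rewrite subrr normr0 normr_ge0.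
apply: (@lip_min (fun s => if _ then s else r) (fun s => if _ then l e - s else r)).
  by case: ifP => _; rewrite ?subrr ?normr0 ?normr_ge0.
case: ifP => _; rewrite ?subrr ?normr0 ?normr_ge0 //.
by rewrite opprB addrC addrA subrK distrC.
Qed.

Definition arms_v : set (E * R * R) :=
  [set a | exists2 e, incident src tgt e v &
     (src e = v /\ a = (e, 0, 1)) \/ (tgt e = v /\ a = (e, l e, -1))].

Lemma fv_lt e t : 0 < t < l e -> fv e t < r ->
  (src e = v /\ fv e t = t) \/ (tgt e = v /\ fv e t = l e - t).
Proof.
move=> /andP[h1 h2]; rewrite /fv; have hr0 := hr; cases_sv e; minsimp;
  first [ lra | (left; split; [assumption | lra]) | (right; split; [assumption | lra]) ].
Qed.

Lemma good_vertex : good_local src tgt (inl v : gp) r dv arms_v.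
Proof.
split => //.
- move=> e s t x y /dv_on_edge -> /dv_on_edge ->.
  have := fv_lip e s t; rewrite ler_norml => /andP[a b]; lra.
- by rewrite /= asboolT.
- case=> [w|[[e t] h]] /=.
    case: (asboolP (w = v)) => [-> _|_]; [by left|by rewrite ltxx].
  move=> hlt; right.
  have hfv : fv e t < r by exact: hlt.
  have hpos : 0 < fv e t.
    rewrite /fv; case/andP: h => /= h1 h2.
    rewrite !lt_min hr; case: ifP => _; case: ifP => _ //=; rewrite ?subr_gt0 ?h1 ?h2 ?hr //.
  have := fv_lt h hfv; rewrite /fv /= => -[[hs ->]|[ht ->]].
    exists (e, 0, 1); first by exists e; [left|left].
    split; first by case/andP: h.
    by rewrite /armpt /= add0r mul1r (pt_int src tgt h).
  exists (e, l e, -1); first by exists e; [right|right].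
  split; first by case/andP: h => /= *; rewrite subr_gt0.
  by rewrite /armpt /= mulN1r opprB addrC subrK (pt_int src tgt h).
- move=> a [e hi [[hs ->]|[ht ->]]] /=.
    split; first by left.
    split; first by rewrite pt_src // hs.
    move=> s /andP[s0 sr]; have h2 := hrl hi.
    rewrite add0r mul1r; split; first by apply/andP; split; lra.
      by move=> hs0; apply/andP; split; lra.
    rewrite /armpt /= add0r mul1r.
    rewrite (dv_on_edge (on_edge_pt src tgt hl e s)) clamp_id; last by apply/andP; split; lra.
    rewrite /fv asboolT //; have hr0 := hr; case: ifP => _; minsimp; lra.
  split; first by right.
  split; first by rewrite pt_tgt // ht.
  move=> s /andP[s0 sr]; have h2 := hrl hi.
  rewrite mulN1r; split; first by apply/andP; split; lra.
    by move=> hs0; apply/andP; split; lra.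
  rewrite /armpt /= mulN1r.
  rewrite (dv_on_edge (on_edge_pt src tgt hl e _)) clamp_id; last by apply/andP; split; lra.
  rewrite /fv (asboolT ht); have hr0 := hr; case: ifP => _; minsimp; lra.
Qed.

Lemma arms_v_fin : finite_set [set e | incident src tgt e v] -> finite_set arms_v.
Proof.
move=> hf; apply: (@sub_finite_set _ _ ((fun e => (e, 0, 1)) @` [set e | incident src tgt e v]
  `|` (fun e => (e, l e, -1)) @` [set e | incident src tgt e v])).
  move=> a [e hi [[_ ->]|[_ ->]]]; [left|right]; by exists e.
by rewrite finite_setU; split; apply: finite_image.
Qed.

End Vertex.

Lemma exists_r (A : set E) : finite_set A -> exists2 r : R, 0 < r & forall e, A e -> 2 * r <= l e.
Proof.
move=> hA; have [s ->] := (@finite_seqP {classic E} A).1 hA.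
elim: s => [|e s [r hr H]]; first by exists 1 => //= e; rewrite in_nil.
exists (Num.min r (l e / 2)); first by rewrite lt_min hr /= divr_gt0.
move=> e' /=; rewrite in_cons => /orP[/eqP ->|he'].
  have := hl e => hle; minsimp; lra.
have := H e' he' => hle; minsimp; lra.
Qed.

Section Interior.
Variables (e0 : E) (t0 : R) (h0 : 0 < t0 < l e0).

Definition ri : R := Num.min t0 (l e0 - t0).

Lemma ri_gt0 : 0 < ri.
Proof. by case/andP: h0 => a b; rewrite lt_min a subr_gt0 b. Qed.

Definition di (q : gp) : R :=
  match q with
  | inl _ => ri
  | inr et => if `[< (sval et).1 = e0 >] then Num.min ri `|(sval et).2 - t0| else ri
  end.

Definition fi (e : E) (s : R) : R := if `[< e = e0 >] then Num.min ri `|s - t0| else ri.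

Definition p0 : gp := inr (exist _ (e0, t0) h0).

Definition arms_i : set (E * R * R) := [set (e0, t0, 1); (e0, t0, -1)].

Lemma di_on_edge e s x : on_edge e s x -> di x = fi e s.
Proof.
rewrite /fi; case: (asboolP (e = e0)) => [->|hne].
  have := h0; rewrite /ri => /andP[a b].
  case=> [[-> ->]|[[-> ->]|[h ->]]] //=; rewrite ?asboolT //.
    by rewrite /ri sub0r normrN gtr0_norm //; minsimp; lra.
  by rewrite /ri gtr0_norm ?subr_gt0 //; minsimp; lra.
by case=> [[_ ->]|[[_ ->]|[h ->]]] //=; rewrite asboolF.
Qed.

Lemma fi_lip e s t : `|fi e s - fi e t| <= `|s - t|.
Proof.
rewrite /fi; case: ifP => _; last by rewrite subrr normr0.
apply: (@lip_min (fun=> ri) (fun s => `|s - t0|)); first by rewrite subrr normr0.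
by apply: le_trans (ler_dist_dist _ _) _; rewrite opprB addrA subrK.
Qed.

Lemma pt_t0 : pt e0 t0 = p0.
Proof. exact: pt_int. Qed.

Lemma good_interior : good_local src tgt p0 ri di arms_i.
Proof.
have hri := ri_gt0; have := h0 => /andP[a0 b0].
have hri1 : ri <= t0 by rewrite /ri ge_min lexx.
have hri2 : ri <= l e0 - t0 by rewrite /ri ge_min lexx orbT.
split => //.
- move=> e s t x y /di_on_edge -> /di_on_edge ->.
  have := fi_lip e s t; rewrite ler_norml => /andP[a b]; lra.
- by rewrite /= asboolT // subrr normr0; minsimp; lra.
- case=> [w|[[e t] h]] /=; first by rewrite ltxx.
  case: (asboolP (e = e0)) => [he|_]; last by rewrite ltxx.
  subst e => hlt.
  have ht : `|t - t0| < ri by move: hlt; minsimp; lra.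
  rewrite (min_idPr (ltW ht)).
  case: (ltgtP t t0) => htt.
  + right; exists (e0, t0, -1); first by right.
    rewrite ltr0_norm ?subr_lt0 // opprB subr_gt0; split => //.
    by rewrite /armpt /= mulN1r opprB addrC subrK (pt_int src tgt h).
  + right; exists (e0, t0, 1); first by left.
    rewrite gtr0_norm ?subr_gt0 //; split => //.
    by rewrite /armpt /= mul1r addrC subrK (pt_int src tgt h).
  + left; subst t; rewrite /p0; congr (inr (exist _ _ _)); exact: bool_irrelevance.
- move=> a [->|->] /=; (split; [by [left|right] | split; [exact: pt_t0|]]);
    move=> s /andP[s0 sr]; rewrite ?mul1r ?mulN1r.
  + split; [by apply/andP; split; lra | by move=> _; apply/andP; split; lra |].
    rewrite /armpt /= mul1r (di_on_edge (on_edge_pt src tgt hl e0 _)) clamp_id;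
      last by apply/andP; split; lra.
    rewrite /fi asboolT // addrAC subrr add0r ger0_norm //; minsimp; lra.
  + split; [by apply/andP; split; lra | by move=> _; apply/andP; split; lra |].
    rewrite /armpt /= mulN1r (di_on_edge (on_edge_pt src tgt hl e0 _)) clamp_id;
      last by apply/andP; split; lra.
    rewrite /fi asboolT // addrAC subrr add0r normrN ger0_norm //; minsimp; lra.
Qed.

Lemma arms_i_fin : finite_set arms_i.
Proof. exact: finite_set2. Qed.

End Interior.
End Inst.

Import numFieldNormedType.Exports.

Lemma lip_cont (R : realType) (X : pseudoMetricType R) (f : R -> X) :
  (forall s t e, `|s - t| < e -> ball (f s) e (f t)) -> continuous f.
Proof.
move=> H x; apply/cvg_ballP => eps he.
near=> y; apply: H.
near: y; apply/nbhs_ballP; exists eps => //.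
Unshelve. all: by end_near. Qed.

Section Metric.
Variables (R : realType) (V E : Type) (src tgt : E -> V) (l : E -> R).
Hypothesis hl : forall e, 0 < l e.
Hypothesis hconn : graph_connected src tgt.
Variables (X : completePseudoMetricType R) (dX : X -> X -> R) (iota : gpoint V l -> X).
Hypothesis hcompl : is_metric_completion (gdist src tgt l) dX iota.

Local Notation gp := (gpoint V l).
Local Notation gdist := (gdist src tgt l).
Local Notation pt := (pt src tgt l).
Local Notation armpt := (armpt src tgt l).

Lemma dXP x y e : ball x e y <-> dX x y < e.
Proof. by case: hcompl => h _ _ _; apply: h. Qed.

Lemma dX_iota p q : dX (iota p) (iota q) = gdist p q.
Proof. by case: hcompl => _ _ h _; apply: h. Qed.

Lemma open_lt x e : open [set w | dX x w < e].
Proof.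
rewrite openE => w /= hw; apply/nbhs_ballP.
exists ((e - dX x w) / 2); first by rewrite /=; move: hw; lra.
move=> w' /= hw'.
have h1 : ball x (dX x w + (e - dX x w) / 2) w by apply/dXP; move: hw; lra.
have := ball_triangle h1 hw' => /dXP; set a := dX x w => h2; apply: lt_le_trans h2 _.
move: hw; lra.
Qed.

Lemma dense_iota z e : 0 < e -> exists p, dX z (iota p) < e.
Proof.
move=> he; case: hcompl => _ _ _ hd.
have [w [/= hw [p _ hp]]] := hd _ (ex_intro _ z (proj1 (dXP z z e) (ballxx z he))) (open_lt z e).
by exists p; rewrite hp.
Qed.

Lemma dX_ge0 x y : 0 <= dX x y.
Proof.
rewrite leNgt; apply/negP => hc.
have hc2 : 0 < - dX x y / 2 by move: hc; lra.
have [p hp] := dense_iota x hc2.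
have b1 : ball (iota p) (- dX x y / 2) x by apply/ball_sym/dXP.
have b2 : ball x (dX x y / 2) y by apply/dXP; move: hc; lra.
have b3 : ball y (dX x y / 2) x by apply/ball_sym.
have b4 : ball x (- dX x y / 2) (iota p) by apply/dXP.
have := ball_triangle (ball_triangle (ball_triangle b1 b2) b3) b4 => /dXP.
rewrite dX_iota gdist_xx; last exact: reach.
move: hc; lra.
Qed.

Lemma dX_sym x y : dX x y = dX y x.
Proof.
apply/eqP; rewrite eq_le; apply/andP; split; apply/ler_addgt0Pr => e he.
  apply/ltW/dXP/ball_sym/dXP; rewrite ltrDl //.
apply/ltW/dXP/ball_sym/dXP; rewrite ltrDl //.
Qed.

Lemma dX_tri x y z : dX x z <= dX x y + dX y z.
Proof.
apply/ler_addgt0Pr => e he; apply/ltW/dXP.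
have b1 : ball x (dX x y + e / 2) y by apply/dXP; move: he; lra.
have b2 : ball y (dX y z + e / 2) z by apply/dXP; move: he; lra.
have := ball_triangle b1 b2; apply: le_ball; rewrite le_eqVlt; apply/orP; left; apply/eqP.
by rewrite addrACA -splitr.
Qed.

Lemma dX_xx x : dX x x = 0.
Proof.
apply/eqP; rewrite eq_le dX_ge0 andbT; apply/ler_addgt0Pr => e he.
by rewrite add0r; apply/ltW/dXP/ballxx.
Qed.

Lemma dX_eq0 x y : dX x y = 0 -> x = y.
Proof. by case: hcompl => _ h _ _; apply: h. Qed.

Lemma open_gt x e : open [set w | e < dX x w].
Proof.
rewrite openE => w /= hw; apply/nbhs_ballP.
exists (dX x w - e); first by rewrite /= subr_gt0.
move=> w' /= /dXP hw'; have := dX_tri x w' w; rewrite (dX_sym w' w).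
set a := dX x w in hw hw' *; move=> h; lra.
Qed.

Lemma X_hausdorff : hausdorff_space X.
Proof.
rewrite ball_hausdorff => a b hab.
have hd : 0 < dX a b.
  rewrite lt_neqAle dX_ge0 andbT; apply/negP => /eqP h.
  by move/eqP: hab; apply; apply: dX_eq0.
exists (PosNum (divr_gt0 hd (ltr0n _ 2)), PosNum (divr_gt0 hd (ltr0n _ 2))) => /=.
apply/eqP; apply/seteqP; split => // w [/dXP h1 /dXP h2].
have := dX_tri a w b; rewrite (dX_sym w b); move: h1 h2; set c := dX a b => h1 h2 h3.
by exfalso; move: h1 h2 h3; lra.
Qed.

Lemma closed_finite (A : set X) : finite_set A -> closed A.
Proof.
exact: ((@accessible_finite_set_closed X).1 (hausdorff_accessible X_hausdorff)).
Qed.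

Lemma gdist_iota_lip e s t : dX (iota (pt e s)) (iota (pt e t)) <= `|s - t|.
Proof. rewrite dX_iota; exact: gdist_pt. Qed.

Definition armf (a : E * R * R) (s : R) : X := iota (armpt a s).

Lemma armf_cont a : a.2 = 1 \/ a.2 = -1 -> continuous (armf a).
Proof.
move=> hs; apply: lip_cont => s t e hst; apply/dXP.
apply: le_lt_trans (gdist_iota_lip _ _ _) _.
case: hs => ->; rewrite ?mul1r ?mulN1r.
  by rewrite opprD addrACA subrr add0r.
have -> : a.1.2 - s - (a.1.2 - t) = t - s by lra.
by rewrite distrC.
Qed.

Lemma armf_compact a c : a.2 = 1 \/ a.2 = -1 -> compact (armf a @` `[0, c]).
Proof.
move=> hs; apply: continuous_compact; last exact: segment_compact.
by apply: continuous_subspaceT; apply: armf_cont.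
Qed.

Lemma closed_lt x e : closed [set w | dX x w <= e].
Proof.
have -> : [set w | dX x w <= e] = ~` [set w | e < dX x w].
  by apply/seteqP; split => w /=; rewrite leNgt => /negP.
exact/open_closedC/open_gt.
Qed.

End Metric.

Import numFieldNormedType.Exports.

Section Metric2.
Variables (R : realType) (V E : Type) (src tgt : E -> V) (l : E -> R).
Hypothesis hl : forall e, 0 < l e.
Hypothesis hconn : graph_connected src tgt.
Variables (X : completePseudoMetricType R) (dX : X -> X -> R) (iota : gpoint V l -> X).
Hypothesis hcompl : is_metric_completion (gdist src tgt l) dX iota.

Local Notation gp := (gpoint V l).
Local Notation gdist := (gdist src tgt l).
Local Notation pt := (pt src tgt l).
Local Notation armpt := (armpt src tgt l).
Local Notation armf := (armf src tgt iota).

Lemma gl_near p r d arms : good_local src tgt p r d arms -> finite_set arms ->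
  forall z, dX (iota p) z < r / 2 -> z = iota p \/
    exists2 a, arms a & exists s, [/\ 0 < s < r / 2, z = iota (armpt a s) & dX (iota p) z = s].
Proof.
move=> hg hfin z hz.
have [hr HL H0 H2 H3] := hg.
pose Y := [set iota p] `|` \bigcup_(a in arms) armf a @` `[0, 3 * r / 4].
have clY : closed Y.
  apply: closedU; first by apply: (closed_finite hconn hcompl); exact: finite_set1.
  apply: (@closed_bigcup _ {classic (E * R * R)}) => // a ha.
  apply: compact_closed; first exact: (X_hausdorff hconn hcompl).
  by apply: (armf_compact hl hcompl); have [] := H3 a ha.
have zY : closure Y z.
  move=> B /nbhs_ballP [eps /= he hB].
  have he' : 0 < Num.min eps (r / 4) by rewrite lt_min he /=; lra.
  have [q hq] := dense_iota hcompl z he'.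
  have hgq : gdist q p < 3 * r / 4.
    rewrite -(dX_iota hcompl); apply: le_lt_trans (dX_tri hcompl _ z _) _.
    have := dX_sym hcompl (iota q) z; have := dX_sym hcompl z (iota p); move: hq hz; minsimp; lra.
  have hdq := gl_dist hconn hg q.
  exists (iota q); split; last first.
    by apply: hB; apply/(dXP hcompl); move: hq; minsimp; lra.
  have h34 : 3 * r / 4 <= r by lra.
  have [->|[a ha [hpos hqa]]] := H2 q (lt_le_trans (le_lt_trans hdq hgq) h34).
    by left.
  right; exists a => //; exists (d q) => //.
    by rewrite /= in_itv /=; apply/andP; split; lra.
  by rewrite /armf -hqa.
move: zY; rewrite -(closure_id _).1 //.
case=> [->|[a ha [s]]]; first by left.
rewrite /= in_itv /= => /andP[s0 s1] hzs.
have [hsig [hpa _]] := H3 a ha.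
have hds : dX (iota p) z = s.
  rewrite -hzs /armf (dX_sym hcompl) (dX_iota hcompl).
  apply: (gl_arm hl hconn hg ha); apply/andP; split; lra.
case: (ltrgt0P s) => hs.
- right; exists a => //; exists s; split; [apply/andP; split; lra | by rewrite -hzs | exact hds].
- by exfalso; lra.
- left; rewrite -hzs /armf /armpt hs mulr0 addr0.
  by rewrite hpa.
Qed.

End Metric2.

Section Topo.
Variable T : topologicalType.

Lemma normal_sep (A B : set T) : normal_space T -> closed A -> closed B -> A `&` B = set0 ->
  exists U V, [/\ open U, open V, A `<=` U, B `<=` V & U `&` V = set0].
Proof.
move=> hn cA cB hAB.
have hB : set_nbhs A (~` B).
  move=> a Aa; apply: open_nbhs_nbhs; split; first exact: closed_openC.
  by move=> Ba; have : (A `&` B) a by []; rewrite hAB.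
have [N hN hNB] := hn A cA (~` B) hB.
exists N°, (~` closure N); split.
- exact: open_interior.
- exact/closed_openC/closed_closure.
- by move=> a Aa; apply: hN.
- by move=> b Bb hb; apply: (hNB b hb).
- apply/seteqP; split => // z [/interior_subset hz]; apply.
  exact: subset_closure.
Qed.

Definition goodp (S : set T) (x : T) (P : set T * set T) :=
  [/\ open P.1, open P.2, P.1 `&` P.2 = set0, S `<=` P.1 `|` P.2 & P.1 x].

Lemma goodp_I S x P O1 O2 : goodp S x P -> goodp S x (O1, O2) ->
  goodp S x (P.1 `&` O1, P.2 `|` O2).
Proof.
case: P => P1 P2 [/= o1 o2 d1 c1 x1] [/= o1' o2' d2 c2 x2]; split => //=.
- exact: openI.
- exact: openU.
- apply/seteqP; split => // z [[z1 z2] [z3|z3]].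
    by have : (P1 `&` P2) z by []; rewrite d1.
  by have : (O1 `&` O2) z by []; rewrite d2.
- move=> s hs; case: (c1 s hs) => h1; last by right; left.
  by case: (c2 s hs) => h2; [left|right; right].
Qed.

Lemma QC (S : set T) : hausdorff_space T -> compact [set: T] -> closed S ->
  totally_disconnected S -> forall x y, S x -> S y -> x <> y ->
  exists O1 O2, [/\ open O1, open O2, O1 `&` O2 = set0, S `<=` O1 `|` O2 & O1 x /\ O2 y].
Proof.
move=> hT cT cS td x y Sx Sy xy.
pose Q := S `&` \bigcap_(P in goodp S x) (~` P.2).
have QO1 : forall z P, Q z -> goodp S x P -> P.1 z.
  move=> z P [Sz hz] hP; have [_ _ _ c _] := hP.
  by case: (c z Sz) => // h; have := hz P hP.
case: (pselect (Q y)) => Qy; last first.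
  move: Qy; rewrite /Q => /not_andP [//|/existsNP [P /not_implyP [hP]]].
  move=> /contrapT P2y; exists P.1, P.2; have [? ? ? ? ?] := hP; split => //.
exfalso; apply: xy.
have Qx : Q x.
  split => // P hP /=; have [_ _ d _ x1] := hP => x2.
  by have : (P.1 `&` P.2) x by []; rewrite d.
have cQ : closed Q.
  apply: closedI => //; apply: closed_bigI => P0 hP0.
  case: hP0 => o1 o2 _ _ _.
  exact: open_closedC.
have Qconn : connected Q.
  move=> Bs Bs0 [C1 oC1 hC1] [C2 cC2 hC2].
  pose A := Q `&` ~` C1.
  have cA : closed A by apply: closedI => //; exact: open_closedC.
  have cBs : closed Bs by rewrite hC2; exact: closedI.
  have dAB : A `&` Bs = set0.
    by apply/seteqP; split => // z [[_ nC1]]; rewrite hC1 => -[].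
  have [U [V [oU oV AU BV dUV]]] := normal_sep (compact_normal hT cT) cA cBs dAB.
  have QAB : forall z, Q z -> A z \/ Bs z.
    move=> z Qz; case: (pselect (C1 z)) => h; [right; rewrite hC1 | left]; by [].
  have cSc : compact S by apply: (subclosed_compact cS cT).
  have g0 : goodp S x (setT, set0).
    split => //=; [exact: openT|exact: open0|by rewrite setI0|by move=> s _; left].
  have [P hP SP1] : exists2 P, goodp S x P & forall s, S s -> P.1 s -> (U `|` V) s.
    apply: contrapT => hno.
    pose G (P : set T * set T) := S `&` ~` P.2 `&` ~` (U `|` V).
    have G0 : forall P, goodp S x P -> G P !=set0.
      move=> P hP; apply: contrapT => hG; apply: hno; exists P => // s Ss P1s.
      apply: contrapT => hs; apply: hG; exists s; split => //; split => // P2s.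
      have [_ _ d _ _] := hP; by have : (P.1 `&` P.2) s by []; rewrite d.
    have FF : ProperFilter (filter_from (goodp S x) G).
      apply: filter_from_proper; last exact: G0.
      apply: filter_from_filter; first by exists (setT, set0).
      move=> P P' hP hP'; exists (P.1 `&` P'.1, P.2 `|` P'.2).
        by case: P' hP' => P1' P2' hP'; exact: goodp_I.
      by move=> z [[Sz /= nz] nUV]; split; split => //; split => // h; apply: nz; [left|right].
    have FS : filter_from (goodp S x) G S by exists (setT, set0) => // z [[]].
    have [c [Sc hc]] := cSc _ FF FS.
    rewrite clusterE in hc.
    have GC : forall P, goodp S x P -> G P c.
      move=> P hP; have : closure (G P) c by apply: hc; exists P.
      have cG : closed (G P).
        apply: closedI; first apply: closedI => //.
          by case: hP => _ o2 _ _ _; exact: open_closedC.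
        exact/open_closedC/openU.
      by rewrite -(closure_id _).1.
    have Qc : Q c by split => // P hP; have [[_ h] _] := GC P hP.
    have [_ nUV] := GC _ g0.
    by case: (QAB c Qc) => [/AU|/BV] h; apply: nUV; [left|right].
  have Px : P.1 x by case: hP.
  case: (QAB x Qx) => [/AU xU|/BV xV].
  - exfalso; have [b Bb] := Bs0.
    have gd : goodp S x (P.1 `&` U, P.2 `|` V).
      have [ho1 ho2 hd hc _] := hP; split => //=.
      + exact: openI.
      + exact: openU.
      + apply/seteqP; split => // z [[z1 z2] [z3|z3]].
          by have : (P.1 `&` P.2) z by []; rewrite hd.
        by have : (U `&` V) z by []; rewrite dUV.
      + move=> s Ss; case: (hc s Ss) => h; last by right; left.
        by case: (SP1 s Ss h) => h'; [left|right; right].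
    have Qb : Q b by rewrite hC2 in Bb; case: Bb.
    have := QO1 b _ Qb gd => -[_ bU].
    have bV : V b := BV b Bb.
    have : (U `&` V) b by [].
    by rewrite dUV.
  - have gd : goodp S x (P.1 `&` V, P.2 `|` U).
      have [ho1 ho2 hd hc _] := hP; split => //=.
      + exact: openI.
      + exact: openU.
      + apply/seteqP; split => // z [[z1 z2] [z3|z3]].
          by have : (P.1 `&` P.2) z by []; rewrite hd.
        by have : (U `&` V) z by []; rewrite dUV.
      + move=> s Ss; case: (hc s Ss) => h; last by right; left.
        by case: (SP1 s Ss h) => h'; [right; right|left].
    apply/seteqP; split; first by rewrite hC1 => z [].
    move=> z Qz; case: (QAB z Qz) => // Az.
    have := QO1 z _ Qz gd => -[_ zV].
    have zU : U z := AU z Az.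
    have : (U `&` V) z by [].
    by rewrite dUV.
have : connected_component S x y.
  by exists Q => //; split => //; move=> z [].
by rewrite td // => ->.
Qed.

End Topo.

Import numFieldNormedType.Exports.

Section Final.
Variables (R : realType) (V E : Type) (src tgt : E -> V) (l : E -> R).
Hypothesis hl : forall e, 0 < l e.
Hypothesis hlocfin : forall v, finite_set [set e | incident src tgt e v].
Hypothesis hconn : graph_connected src tgt.
Variables (X : completePseudoMetricType R) (dX : X -> X -> R) (iota : gpoint V l -> X).
Hypothesis hcompl : is_metric_completion (gdist src tgt l) dX iota.

Local Notation gp := (gpoint V l).
Local Notation gdist := (gdist src tgt l).
Local Notation pt := (pt src tgt l).
Local Notation armpt := (armpt src tgt l).

Lemma local_exists (p : gp) : exists r d arms, good_local src tgt p r d arms /\ finite_set arms.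
Proof.
case: p => [v|[[e0 t0] h0]].
  have [r hr hrl] := exists_r hl (hlocfin v).
  exists r, (@dv R V E src tgt l v r), (arms_v src tgt l v); split.
    exact: good_vertex.
  exact: arms_v_fin.
exists (ri l e0 t0), (@di R V E l e0 t0), (arms_i e0 t0); split.
  exact: (good_interior src tgt hl h0).
exact: arms_i_fin.
Qed.

Lemma NI (p : gp) : exists2 eps, 0 < eps & exists2 Es : set E, finite_set Es &
  forall z, dX (iota p) z < eps -> z = iota p \/
    exists e t, [/\ Es e, 0 < t < l e & z = iota (pt e t)].
Proof.
have [r [d [arms [hg hfin]]]] := local_exists p.
have hr : 0 < r by case: hg.
exists (r / 2); first by lra.
exists ((fun a : E * R * R => a.1.1) @` arms); first exact: finite_image.
move=> z hz; have [->|[a ha [s [/andP[s0 s1] -> _]]]] := gl_near hl hconn hcompl hg hfin hz.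
  by left.
right; exists a.1.1, (a.1.2 + a.2 * s).
have [_ [_ /(_ s)]] := (match hg with And5 _ _ _ _ h5 => h5 end) a ha.
case; first by apply/andP; split; lra.
move=> _ /(_ s0) hint _; split => //; by exists a.
Qed.

Lemma NIi e0 t0 (h0 : 0 < t0 < l e0) : exists2 eps, 0 < eps &
  forall z, dX (iota (inr (exist _ (e0, t0) h0))) z < eps ->
    exists t, 0 < t < l e0 /\ z = iota (pt e0 t).
Proof.
have hg := good_interior src tgt hl h0.
have hfin := arms_i_fin e0 t0.
have hr : 0 < ri l e0 t0 by case: hg.
exists (ri l e0 t0 / 2); first by lra.
move=> z hz; have [->|[a ha [s [/andP[s0 s1] -> _]]]] := gl_near hl hconn hcompl hg hfin hz.
  by exists t0; split => //; rewrite (pt_int src tgt h0).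
have [_ [_ /(_ s)]] := (match hg with And5 _ _ _ _ h5 => h5 end) a ha.
case; first by apply/andP; split; lra.
move=> _ /(_ s0) hint _.
have ea : a.1.1 = e0 by case: ha => ->.
exists (a.1.2 + a.2 * s); split; first by rewrite -ea.
by rewrite /armpt ea.
Qed.

Lemma dX_pos x y : x <> y -> 0 < dX x y.
Proof.
move=> hxy; rewrite lt_neqAle (dX_ge0 hconn hcompl) andbT.
by apply/negP => /eqP h; apply: hxy; apply: (dX_eq0 hcompl).
Qed.

Lemma local_sep (p : gp) (y : X) : iota p <> y ->
  exists (W : set gp) (Ux Uy : set X),
      [/\ finite_set W, open Ux /\ open Uy, Ux `&` Uy = set0,
          Ux (iota p) /\ Uy y & ~` (iota @` W) = Ux `|` Uy].
Proof.
move=> hpy.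
have [r [d [arms [hg hfin]]]] := local_exists p.
have hr : 0 < r by case: hg.
have hd := dX_pos hpy.
pose rho := Num.min (r / 4) (dX (iota p) y / 2).
have hrho : 0 < rho by rewrite lt_min; apply/andP; split; lra.
have hrho1 : rho < r / 2 by rewrite /rho; minsimp; lra.
have hrho2 : rho < dX (iota p) y by rewrite /rho; minsimp; lra.
exists ((armpt^~ rho) @` arms), [set z | dX (iota p) z < rho], [set z | rho < dX (iota p) z].
split.
- exact: finite_image.
- by split; [apply: (open_lt hcompl)|apply: (open_gt hcompl)].
- by apply/seteqP; split => // z [/= h1 h2]; move: h1 h2; lra.
- by split => //=; rewrite (dX_xx hconn hcompl).
- have hW : forall a, arms a -> dX (iota p) (iota (armpt a rho)) = rho.
    move=> a ha; rewrite (dX_sym hcompl) (dX_iota hcompl).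
    by apply: (gl_arm hl hconn hg ha); apply/andP; split; lra.
  apply/seteqP; split => z /=.
    move=> hz; case: (ltgtP (dX (iota p) z) rho) => h; [by left|by right|exfalso].
    have hz2 : dX (iota p) z < r / 2 by rewrite h.
    have [hzp|[a ha [s [_ hza hs]]]] := gl_near hl hconn hcompl hg hfin hz2.
      by move: h; rewrite hzp (dX_xx hconn hcompl); lra.
    apply: hz; exists (armpt a rho); first by exists a.
    by rewrite hza -hs h.
  move=> hz [w [a ha <-] hwz]; rewrite -hwz hW // in hz.
  by case: hz; lra.
Qed.

Lemma pt_Gint (B : set V) e t : 0 < t < l e -> G_int l B (pt e t).
Proof. by move=> h; rewrite (pt_int src tgt h) => v _. Qed.

Lemma int_open (B : set V) : open (iota @` G_int l B).
Proof.
rewrite openE => _ [p hp <-].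
have [eps he [Es _ H]] := NI p.
apply/nbhs_ballP; exists eps => // w /(dXP hcompl) hw.
have [->|[e [t [_ ht ->]]]] := H w hw; first by exists p.
by exists (pt e t) => //; apply: pt_Gint.
Qed.

Lemma isolated (B : set V) v : exists2 eps, 0 < eps & forall z,
  bdry_bar (G_int l B) iota z -> dX (iota (inl v)) z < eps -> z = iota (inl v).
Proof.
have [eps he [Es _ H]] := NI (inl v).
exists eps => // z hS hz.
have [//|[e [t [_ ht hzt]]]] := H z hz.
by exfalso; apply: hS; exists (pt e t) => //; apply: pt_Gint.
Qed.

Lemma wc_td (B : set V) : weakly_connected iota -> totally_disconnected (bdry_bar (G_int l B) iota).
Proof.
move=> wc x Sx; apply/seteqP; split; last by move=> _ ->; exact: connected_component_refl.
move=> y [C [Cx CS Cc] Cy].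
apply: contrapT => hxy; have {}hxy : x <> y by move=> h; apply: hxy; rewrite h.
have [W [Ux [Uy [finW [oUx oUy] dU [Uxx Uyy] cov]]]] := wc x y hxy.
have CW : forall w, W w -> ~ C (iota w).
  move=> w Ww Cw.
  have hw : ~ G_int l B w by move=> hG; apply: (CS _ Cw); exists w.
  have [v [Bv hwv]] : exists v, B v /\ w = inl v.
    apply: contrapT => hn; apply: hw => v Bv hwv; apply: hn; by exists v.
  subst w.
  have [eps he Hi] := isolated B v.
  have h1 : [set iota (inl v)] = C.
    apply: Cc.
    - by exists (iota (inl v)).
    - exists [set z | dX (iota (inl v)) z < eps]; first exact: (open_lt hcompl).
      apply/seteqP; split => z.
        by move=> -> /=; split => //; rewrite (dX_xx hconn hcompl).
      by move=> [Cz hz]; apply: Hi => //; apply: CS.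
    - exists [set iota (inl v)]; first by apply: (closed_finite hconn hcompl); exact: finite_set1.
      by apply/seteqP; split => z; [move=> ->|move=> []].
  by apply: hxy; rewrite -h1 in Cx Cy; rewrite Cx Cy.
have CU : forall z, C z -> (Ux `|` Uy) z.
  move=> z Cz; rewrite -cov => -[w Ww hwz]; apply: (CW w Ww); by rewrite hwz.
have h2 : C `&` Ux = C.
  apply: Cc.
  - by exists x.
  - by exists Ux.
  - exists (~` Uy); first exact: open_closedC.
    apply/seteqP; split => z [Cz hz]; split => //.
      by move=> hUy; have : (Ux `&` Uy) z by []; rewrite dU.
    by case: (CU z Cz).
have : (C `&` Ux) y by rewrite h2.
case=> _ hUx.
by have : (Ux `&` Uy) y by []; rewrite dU.
Qed.

Definition Eo (e : E) : set X := [set w | exists t, 0 < t < l e /\ w = iota (pt e t)].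
Definition Ebar (e : E) : set X := (fun t => iota (pt e t)) @` `[0, l e].

Lemma Eo_open e : open (Eo e).
Proof.
rewrite openE => _ [t [ht ->]].
have [eps he H] := NIi ht.
apply/nbhs_ballP; exists eps => // w /(dXP hcompl) hw.
by rewrite -(pt_int src tgt ht) in H; apply: H.
Qed.

Lemma Ebar_closed e : closed (Ebar e).
Proof.
apply: compact_closed; first exact: (X_hausdorff hconn hcompl).
rewrite /Ebar; have -> : (fun t => iota (pt e t)) = armf src tgt iota (e, 0, 1).
  by apply/funext => t; rewrite /armf /armpt /= add0r mul1r.
by apply: (armf_compact hl hcompl); left.
Qed.

Lemma Eo_Ebar e : Eo e `<=` Ebar e.
Proof.
move=> _ [t [/andP[h1 h2] ->]]; exists t => //.
by rewrite /= in_itv /=; apply/andP; split; apply: ltW.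
Qed.

Lemma finite_cover (T : set X) : compact T -> (forall z, T z -> exists p, iota p = z) ->
  exists Ps : set gp, exists2 EF : set E, finite_set Ps /\ finite_set EF &
    T `<=` iota @` Ps `|` \bigcup_(e in EF) Eo e.
Proof.
move=> cT TI; apply: contrapT => hno.
pose D := [set i : set gp * set E | finite_set i.1 /\ finite_set i.2].
pose f (i : set gp * set E) := T `\` (iota @` i.1 `|` \bigcup_(e in i.2) Eo e).
have f0 : forall i, D i -> f i !=set0.
  move=> [Ps EF] [/= h1 h2]; apply: contrapT => hn; apply: hno.
  exists Ps, EF => // z Tz; apply: contrapT => hz; apply: hn; by exists z.
have FF : ProperFilter (filter_from D f).
  apply: filter_from_proper; last exact: f0.
  apply: filter_from_filter; first by exists (set0, set0).
  move=> i j [hi1 hi2] [hj1 hj2]; exists (i.1 `|` j.1, i.2 `|` j.2).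
    by split; rewrite finite_setU.
  move=> z [Tz hz]; split; split => // h; apply: hz.
  - by case: h => [[p hp <-]|[e he hz]]; [left; exists p => //; left|right; exists e => //; left].
  - by case: h => [[p hp <-]|[e he hz]]; [left; exists p => //; right|right; exists e => //; right].
have FT : filter_from D f T by exists (set0, set0) => // z [].
have [c [Tc hc]] := cT _ FF FT.
rewrite clusterE in hc.
have [p hp] := TI c Tc.
have [eps he [Es hEs H]] := NI p.
have : closure (f ([set p], Es)) c.
  apply: hc; exists ([set p], Es) => //; split => //; exact: finite_set1.
move=> /(_ (ball c eps)) [].
  by apply/nbhs_ballP; exists eps.
move=> w [[Tw hw] /(dXP hcompl) hcw]; apply: hw.
rewrite -hp in hcw; have [->|[e [t [he' ht ->]]]] := H w hcw.
  by left; exists p.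
by right; exists e => //; exists t.
Qed.

Lemma td_wc (B : set V) : compact [set: X] ->
  totally_disconnected (bdry_bar (G_int l B) iota) -> weakly_connected iota.
Proof.
move=> cX td x y hxy.
case: (pselect (exists p, iota p = x)) => [[p hp]|nx]; first by subst x; exact: (local_sep hxy).
case: (pselect (exists q, iota q = y)) => [[q hq]|ny].
  have hqx : iota q <> x by move=> h; apply: hxy; rewrite -h hq.
  have [W [Ux [Uy [fW [oUx oUy] d [h1 h2] c]]]] := local_sep hqx.
  exists W, Uy, Ux; split => //; first by rewrite setIC.
    by rewrite -hq.
  by rewrite setUC.
have hT := X_hausdorff hconn hcompl.
pose S := bdry_bar (G_int l B) iota.
have cS : closed S by apply: open_closedC; exact: int_open.
have Sx : S x by move=> [p _ hp]; apply: nx; exists p.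
have Sy : S y by move=> [p _ hp]; apply: ny; exists p.
case: (QC hT cX cS td Sx Sy hxy) => Q1 [Q2 [oQ1 oQ2 dO SO [Q1x Q2y]]].
pose Tt := ~` (Q1 `|` Q2).
have cTt : compact Tt.
  by apply: (subclosed_compact _ cX) => //; apply: open_closedC; exact: openU.
have TtI : forall z, Tt z -> exists p, iota p = z.
  move=> z Tz; have nS : ~ S z by move=> /SO.
  have := contrapT nS => -[p _ hp]; by exists p.
have [Ps [EF [fPs fEF] cov]] := finite_cover cTt TtI.
pose Cl := \bigcup_(e in EF) Ebar e.
have cCl : closed Cl.
  apply: (@closed_bigcup _ {classic E}) => // e _; exact: Ebar_closed.
pose W := Ps `|` (fun e => inl (src e)) @` EF `|` (fun e => inl (tgt e)) @` EF.
have fW : finite_set W by rewrite !finite_setU; split; [split|]; [|apply: finite_image|apply: finite_image].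
have cIW : closed (iota @` W) by apply: (closed_finite hconn hcompl); exact: finite_image.
have ClI : forall z, Cl z -> exists p, iota p = z.
  by move=> z [e _ [t _ <-]]; exists (pt e t).
exists W, ((~` Cl `&` Q1) `&` ~` (iota @` W)),
  (((~` Cl `&` Q2) `|` \bigcup_(e in EF) Eo e) `&` ~` (iota @` W)).
split => //.
- split; apply: openI; try exact: closed_openC.
  + by apply: openI => //; exact: closed_openC.
  + apply: openU; first by apply: openI => //; exact: closed_openC.
    by apply: bigcup_open => e _; exact: Eo_open.
- apply/seteqP; split => // z [[[nCl z1] _] [[[_ z2]|[e he hEo]] _]].
    by have : (Q1 `&` Q2) z by []; rewrite dO.
  by apply: nCl; exists e => //; apply: Eo_Ebar.
- split.
  + split; first by split => //; move=> /ClI [p hp]; apply: nx; by exists p.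
    by move=> [w _ hw]; apply: nx; by exists w.
  + split; first by left; split => //; move=> /ClI [p hp]; apply: ny; by exists p.
    by move=> [w _ hw]; apply: ny; by exists w.
- apply/seteqP; split => z; last by case=> -[].
  move=> nW.
  case: (pselect (Cl z)) => [[e he [t ht htz]]|nCl].
    move: ht; rewrite /= in_itv /= => /andP[t0 t1].
    case: (ltrgt0P t) => [tpos|tneg|tz]; last first.
    - exfalso; apply: nW; exists (inl (src e)); first by left; right; exists e.
      by rewrite -htz tz (pt_src src tgt hl).
    - by exfalso; move: t0 tneg; lra.
    case: (ltgtP t (l e)) => [tlt|tgt'|tl].
    - right; split => //; right; exists e => //; exists t; split => //.
      by apply/andP; split.
    - by exfalso; move: t1 tgt'; lra.
    - exfalso; apply: nW; exists (inl (tgt e)); first by right; exists e.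
      by rewrite -htz tl (pt_tgt src tgt hl).
  case: (pselect (Q1 z)) => h1; first by left.
  case: (pselect (Q2 z)) => h2; first by right; split => //; left.
  have Tz : Tt z by case.
  case: (cov z Tz) => [[p hp hpz]|[e he hEo]].
    by exfalso; apply: nW; exists p => //; left; left.
  by exfalso; apply: nCl; exists e => //; apply: Eo_Ebar.
Qed.

End Final.

Theorem theorem2p5 (R : realType) (V E : Type) (src tgt : E -> V) (l : E -> R)
  (B : set V)
  (hV : countable [set: V]) (hE : countable [set: E])
  (hl : forall e, 0 < l e)
  (hlocfin : forall v, finite_set [set e | incident src tgt e v])
  (hconn : graph_connected src tgt)
  (hB : forall v, deg1 src tgt v -> B v)
  (X : completePseudoMetricType R) (dX : X -> X -> R)
  (iota : gpoint V l -> X)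
  (hcompl : is_metric_completion (gdist src tgt l) dX iota)
  (hcpt : compact [set: X]) :
  totally_disconnected (bdry_bar (G_int l B) iota) <-> weakly_connected iota.
Proof.
split.
  exact: (@td_wc _ _ _ _ _ _ hl hlocfin hconn _ _ _ hcompl B hcpt).
exact: (@wc_td _ _ _ _ _ _ hl hlocfin hconn _ _ _ hcompl B).
Qed.
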